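(* Let $W:\mathcal X\to\mathcal Y$ be a DMC with $|\mathcal Y|>2|\mathcal X|$ and fix any input distribution. Then there exist two distinct output letters $\alpha,\beta\in\mathcal Y$ whose merger yields a channel $Q$ with $$I(W)-I(Q)\le \mu(|\mathcal X|)\,|\mathcal Y|^{-\frac{|\mathcal X|+1}{|\mathcal X|-1}},$$ where $\mu(n)=\frac{2}{n-1}\nu(n)$.
   Context: $\mathcal X,\mathcal Y$ are finite disjoint sets with $|\mathcal X|\ge 2$; $W:\mathcal X\to\mathcal Y$ is a discrete memoryless channel with transition probabilities $W(y|x)$. An input distribution $\pi(x)>0$ is fixed and output probabilities $\pi(y)=\sum_x\pi(x)W(y|x)$ are assumed positive. $I(\cdot)$ denotes input–output mutual information (natural log) under this input distribution. Merging two distinct output letters $\alpha,\beta$ produces the channel $Q$ with output alphabet $(\mathcal Y\setminus\{\alpha,\beta\})\cup\{\gamma\}$, $Q(\gamma|x)=W(\alpha|x)+W(\beta|x)$ and $Q(y|x)=W(y|x)$ otherwise. The constant is $$\nu(n)=\frac{\pi n(n-1)}{2\left(\sqrt{1+\frac{1}{2(n-1)}}-1\right)^2}\left(\frac{2n}{\Gamma\!\left(1+\frac{n-1}{2}\right)}\right)^{\frac{2}{n-1}},$$ with $\pi=3.14159\ldots$ and $\Gamma$ the Gamma function. *)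

(* Defs.v *)
From mathcomp Require Import all_boot.
From Stdlib Require Import Reals.

Set Implicit Arguments.
Unset Strict Implicit.
Unset Printing Implicit Defensive.

Definition Rsum {I : finType} (F : I -> R) : R := \big[Rplus/0%R]_(i : I) F i.

(* output probabilities pi(y) = sum_x pi(x) W(y|x);  W x y stands for W(y|x) *)
Definition outprob {X Y : finType} (pi : X -> R) (W : X -> Y -> R) (y : Y) : R :=
  Rsum (fun x => (pi x * W x y)%R).

Definition xlogdiv (a b : R) : R :=
  if Req_EM_T a 0 then 0%R else (a * ln (a / b))%R.

Definition mutinfo {X Y : finType} (pi : X -> R) (W : X -> Y -> R) : R :=
  Rsum (fun x => Rsum (fun y => (pi x * xlogdiv (W x y) (outprob pi W y))%R)).

(* output alphabet of the merged channel: (Y \ {alpha,beta}) u {gamma},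
   gamma is represented by None *)
Definition merged_out (Y : finType) (a b : Y) : finType :=
  option {y : Y | (y != a) && (y != b)}.

Definition merge_letters {X Y : finType} (W : X -> Y -> R) (a b : Y) :
    X -> merged_out a b -> R :=
  fun x o => match o with
             | None => (W x a + W x b)%R
             | Some y => W x (val y)
             end.

(* gamma_half k = Gamma(1 + k/2), via Gamma(1)=1, Gamma(3/2)=sqrt(pi)/2,
   Gamma(s+1) = s Gamma(s) *)
Fixpoint gamma_half (k : nat) : R :=
  match k with
  | O => 1%R
  | S O => (sqrt PI / 2)%R
  | S (S j as k') => ((1 + INR j / 2) * gamma_half j)%R
  end.

Definition nu (n : nat) : R :=
  ((PI * INR n * (INR n - 1)) /
     (2 * (sqrt (1 + 1 / (2 * (INR n - 1))) - 1) ^ 2) *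
   Rpower (2 * INR n / gamma_half (n - 1)) (2 / (INR n - 1)))%R.

Definition mu (n : nat) : R := (2 / (INR n - 1) * nu n)%R.

Arguments merge_letters {X Y} W a b _ _.

(* Main.v *)
From HB Require Import structures.
From mathcomp Require Import all_boot.
From Stdlib Require Import Reals Lra Psatz Classical.
Require Import Defs.
Open Scope R_scope.
Lemma Rplus_assoc' : associative Rplus. Proof. move=> *; ring. Qed.
HB.instance Definition _ := Monoid.isComLaw.Build R 0%R Rplus Rplus_assoc' Rplus_comm Rplus_0_l.

Lemma big_opt (T : finType) (F : option T -> R) :
  \big[Rplus/0]_(o : option T) F o = F None + \big[Rplus/0]_(t : T) F (Some t).
Proof.
have -> : index_enum {: option T} = None :: map Some (index_enum T).
  by rewrite /index_enum !unlock /= /option_enum !unlock.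
by rewrite big_cons big_map.
Qed.

Section S.
Context {I : finType}.
Implicit Types (P : pred I) (F G : I -> R).

Lemma bsum_le P F G : (forall i, P i -> F i <= G i) ->
  \big[Rplus/0]_(i | P i) F i <= \big[Rplus/0]_(i | P i) G i.
Proof. move=> H; apply: (big_ind2 (fun a b => a <= b)) => //; [lra | move=> *; lra]. Qed.

Lemma bsum_ge0 P F : (forall i, P i -> 0 <= F i) -> 0 <= \big[Rplus/0]_(i | P i) F i.
Proof. move=> H; apply: (big_ind (fun a => 0 <= a)) => //; [lra | move=> *; lra]. Qed.

Lemma bsum_mulr P c F : \big[Rplus/0]_(i | P i) (c * F i) = c * \big[Rplus/0]_(i | P i) F i.
Proof. apply: (big_rec2 (fun a b => a = c * b)); [ring | move=> i a b _ ->; ring]. Qed.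

Lemma bsum_add P F G : \big[Rplus/0]_(i | P i) (F i + G i) =
   \big[Rplus/0]_(i | P i) F i + \big[Rplus/0]_(i | P i) G i.
Proof. by rewrite big_split. Qed.

Lemma bsum_opp P F : \big[Rplus/0]_(i | P i) (- F i) = - \big[Rplus/0]_(i | P i) F i.
Proof. apply: (big_rec2 (fun a b => a = - b)); [ring | move=> i a b _ ->; ring]. Qed.

Lemma bsum_const P c : \big[Rplus/0]_(i | P i) c = INR #|P| * c.
Proof.
have -> : #|P| = count P (index_enum I).
  by rewrite cardE /enum_mem size_filter.
elim: (index_enum I) => [|x r IH]; first by rewrite big_nil /=; rewrite Rmult_0_l.
rewrite big_cons /=; case: (P x); rewrite IH ?add1n ?add0n ?S_INR; ring.
Qed.

Lemma Rsum_D1 F a : Rsum F = F a + \big[Rplus/0]_(i | i != a) F i.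
Proof. by rewrite /Rsum (bigD1 a). Qed.
End S.
Lemma ln_le x : 0 < x -> ln x <= x - 1.
Proof. move=> hx; have := exp_ineq1_le (ln x); rewrite exp_ln //; lra. Qed.

Lemma ln_div x y : 0 < x -> 0 < y -> ln (x / y) = ln x - ln y.
Proof. move=> hx hy; rewrite /Rdiv ln_mult ?ln_Rinv //; try lra; by apply: Rinv_0_lt_compat. Qed.

Lemma div_le x y z : 0 < y -> x <= z * y -> x / y <= z.
Proof.
move=> hy h; apply: (Rmult_le_reg_r y) => //.
rewrite /Rdiv Rmult_assoc Rinv_l ?Rmult_1_r //; lra.
Qed.

Lemma xl0 b : xlogdiv 0 b = 0.
Proof. by rewrite /xlogdiv; case: Req_EM_T => //; lra. Qed.

Lemma xlpos u b : u <> 0 -> xlogdiv u b = u * ln (u / b).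
Proof. by rewrite /xlogdiv; case: Req_EM_T. Qed.

Lemma key_alg p q K a b : 0 < p -> 0 < q -> p <= K -> q <= K -> 0 <= a -> 0 <= b ->
  p * q * (a^2 - b^2)^2 <= 2 * K * (a - b)^2 * (p * a^2 + q * b^2).
Proof.
move=> hp hq hpK hqK ha hb.
have e : (a^2 - b^2)^2 = (a-b)^2 * (a+b)^2 by ring.
rewrite e.
have h1 : (a+b)^2 <= 2 * (a^2 + b^2) by have := pow2_ge_0 (a - b); lra.
have h2 : p * q * (a^2 + b^2) <= K * (p * a^2 + q * b^2).
  have := Rmult_le_pos (K - q) (p * a^2) ltac:(lra) ltac:(have := pow2_ge_0 a; nra).
  have := Rmult_le_pos (K - p) (q * b^2) ltac:(lra) ltac:(have := pow2_ge_0 b; nra).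
  lra.
have h3 : 0 <= (a-b)^2 by apply: pow2_ge_0.
have h4 : 0 <= p * q by apply: Rmult_le_pos; lra.
have : p * q * ((a - b) ^ 2 * (a + b) ^ 2) <= p * q * ((a - b) ^ 2 * (2 * (a^2 + b^2))).
  apply: Rmult_le_compat_l => //; apply: Rmult_le_compat_l => //.
have := Rmult_le_compat_l ((a-b)^2) _ _ h3 h2.
lra.
Qed.

Lemma xlog_loss p q K a b : 0 < p -> 0 < q -> p <= K -> q <= K -> 0 <= a -> 0 <= b ->
  xlogdiv (p * a^2) p + xlogdiv (q * b^2) q - xlogdiv (p * a^2 + q * b^2) (p + q)
  <= 2 * K * (a - b)^2.
Proof.
move=> hp hq hpK hqK ha hb.
have [a0|apos] : a = 0 \/ 0 < a by lra.
  subst a; have -> : p * 0^2 = 0 by ring.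
  rewrite xl0 !Rplus_0_l.
  have [b0|bpos] : b = 0 \/ 0 < b by lra.
    subst b; have -> : q * 0^2 = 0 by ring. rewrite !xl0. rewrite (_ : (0 - 0)^2 = 0); [lra | ring].
  have hv : 0 < q * b^2 by apply: Rmult_lt_0_compat => //; apply: pow_lt.
  rewrite !xlpos; try lra.
  rewrite !ln_div; try lra.
  have := ln_le ((p+q)/q) ltac:(apply: Rdiv_lt_0_compat; lra).
  rewrite ln_div; try lra.
  move=> hl.
  have : q * b^2 * (ln (p+q) - ln q) <= q * b^2 * ((p+q)/q - 1) by apply: Rmult_le_compat_l; lra.
  have -> : q * b^2 * ((p+q)/q - 1) = p * b^2 by field; lra.
  nra.
have [b0|bpos] : b = 0 \/ 0 < b by lra.
  subst b; have -> : q * 0^2 = 0 by ring.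
  rewrite xl0 !Rplus_0_r.
  have hu : 0 < p * a^2 by apply: Rmult_lt_0_compat => //; apply: pow_lt.
  rewrite !xlpos; try lra.
  rewrite !ln_div; try lra.
  have := ln_le ((p+q)/p) ltac:(apply: Rdiv_lt_0_compat; lra).
  rewrite ln_div; try lra.
  move=> hl.
  have : p * a^2 * (ln (p+q) - ln p) <= p * a^2 * ((p+q)/p - 1) by apply: Rmult_le_compat_l; lra.
  have -> : p * a^2 * ((p+q)/p - 1) = q * a^2 by field; lra.
  nra.
set u := p * a^2. set v := q * b^2.
have ue : u = p * a^2 by []. have ve : v = q * b^2 by [].
have hu : 0 < u by rewrite /u; apply: Rmult_lt_0_compat => //; apply: pow_lt.
have hv : 0 < v by rewrite /v; apply: Rmult_lt_0_compat => //; apply: pow_lt.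
have huv : 0 < u + v by lra.
have hpq : 0 < p + q by lra.
have E : u * (u * (p + q) / (p * (u + v)) - 1) + v * (v * (p + q) / (q * (u + v)) - 1)
   = p * q * (a^2 - b^2)^2 / (p * a^2 + q * b^2).
  rewrite /u /v; field; split; [| split]; apply: Rgt_not_eq; [move: huv; rewrite /u /v | |]; lra.
clearbody u v.
rewrite !xlpos; try lra.
rewrite !ln_div; try lra.
have hX1 : 0 < u * (p+q) / (p * (u+v)).
  by apply: Rdiv_lt_0_compat; apply: Rmult_lt_0_compat.
have hX2 : 0 < v * (p+q) / (q * (u+v)).
  by apply: Rdiv_lt_0_compat; apply: Rmult_lt_0_compat.
have l1 := ln_le _ hX1. have l2 := ln_le _ hX2.
rewrite ln_div ?ln_mult in l1; try (by apply: Rmult_lt_0_compat); try done.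
rewrite ln_div ?ln_mult in l2; try (by apply: Rmult_lt_0_compat); try done.
have m1 : u * (ln u + ln (p + q) - (ln p + ln (u + v))) <= u * (u * (p + q) / (p * (u + v)) - 1)
  by apply: Rmult_le_compat_l; lra.
have m2 : v * (ln v + ln (p + q) - (ln q + ln (u + v))) <= v * (v * (p + q) / (q * (u + v)) - 1)
  by apply: Rmult_le_compat_l; lra.
have K1 := @key_alg p q K a b hp hq hpK hqK ha hb.
have hS : 0 < p * a^2 + q * b^2 by lra.
have : p * q * (a^2 - b^2)^2 / (p * a^2 + q * b^2) <= 2 * K * (a - b)^2.
  apply: div_le => //; lra.
lra.
Qed.

Lemma bsum_C1 (X : finType) (x0 : X) c :
  \big[Rplus/0]_(i | i != x0) c = (INR #|X| - 1) * c.
Proof.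
rewrite bsum_const.
have -> : #|(fun i => i != x0)| = #|predC1 x0| by apply: eq_card.
rewrite cardC1.
have : (0 < #|X|)%nat by apply/card_gt0P; exists x0.
case: #|X| => // k _. rewrite S_INR; simpl predn; ring.
Qed.

Lemma sq_le_of_abs x d : Rabs x <= d -> x ^ 2 <= d ^ 2.
Proof.
move=> h; have h0 := Rabs_pos x.
rewrite -(pow2_abs x); apply: pow_incr; lra.
Qed.

Lemma dist_lemma (X : finType) (a b : X -> R) (x0 : X) (d : R) :
  (forall x, 0 <= a x) -> (forall x, 0 <= b x) ->
  Rsum (fun x => a x ^ 2) = 1 -> Rsum (fun x => b x ^ 2) = 1 ->
  1 / INR #|X| <= a x0 ^ 2 -> 1 / INR #|X| <= b x0 ^ 2 ->
  (2 <= #|X|)%nat -> 0 < d ->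
  (forall x, x != x0 -> Rabs (a x - b x) <= d) ->
  Rsum (fun x => (a x - b x)^2) <= (INR #|X| ^ 2 - 1) * d ^ 2.
Proof.
move=> ha hb sa sb ha0 hb0 hX hd hab.
have hn : 2 <= INR #|X|.
  have -> : 2 = INR 2 by rewrite /= ; ring.
  apply: le_INR; exact/leP.
set n := INR #|X| in hn ha0 hb0 *.
rewrite (Rsum_D1 _ x0) in sa. rewrite (Rsum_D1 _ x0) in sb.
rewrite (Rsum_D1 _ x0).
set U := \big[Rplus/0]_(i | i != x0) a i ^ 2 in sa.
set V := \big[Rplus/0]_(i | i != x0) b i ^ 2 in sb.
set D' := \big[Rplus/0]_(i | i != x0) (a i - b i) ^ 2.
have hD' : D' <= (n - 1) * d ^ 2.
  rewrite /D' /n -(bsum_C1 _ x0); apply: bsum_le => i hi; apply: sq_le_of_abs; exact: hab.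
have hS : \big[Rplus/0]_(i | i != x0) (a i + b i) ^ 2 <= 4.
  have : \big[Rplus/0]_(i | i != x0) (a i + b i) ^ 2 <=
         \big[Rplus/0]_(i | i != x0) (2 * (a i ^ 2) + 2 * (b i ^ 2)).
    apply: bsum_le => i _; have := pow2_ge_0 (a i - b i); lra.
  rewrite bsum_add !bsum_mulr -/U -/V.
  have := pow2_ge_0 (a x0); have := pow2_ge_0 (b x0); lra.
have hr : 0 < n - 1 by lra.
set r := sqrt (n - 1).
have hr0 : 0 < r by apply: sqrt_lt_R0.
have hr2 : r * r = n - 1 by apply: sqrt_sqrt; lra.
have pw : forall i, i != x0 -> d * (a i + b i) <= d * (r / 4 * (a i + b i) ^ 2 + 1 / r).
  move=> i _; apply: Rmult_le_compat_l; first lra.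
  have : 0 <= (r / 2 * (a i + b i) - 1) ^ 2 / r.
    apply: Rmult_le_pos; [apply: pow2_ge_0 | left; apply: Rinv_0_lt_compat; lra].
  have -> : (r / 2 * (a i + b i) - 1) ^ 2 / r = r / 4 * (a i + b i) ^ 2 + 1 / r - (a i + b i).
    field; lra.
  lra.
have sumpw : \big[Rplus/0]_(i | i != x0) (d * (r / 4 * (a i + b i) ^ 2 + 1 / r)) <= 2 * d * r.
  rewrite bsum_mulr bsum_add bsum_mulr bsum_C1 -/n.
  have : r / 4 * \big[Rplus/0]_(i | i != x0) (a i + b i) ^ 2 <= r / 4 * 4.
    apply: Rmult_le_compat_l; lra.
  have -> : (n - 1) * (1 / r) = r by rewrite -hr2; field; lra.
  move=> h; have : d * (r / 4 * \big[Rplus/0]_(i | i != x0) (a i + b i) ^ 2 + r) <= d * (r / 4 * 4 + r).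
    apply: Rmult_le_compat_l; lra.
  lra.
have hUV1 : U - V <= 2 * d * r.
  have : U - V <= \big[Rplus/0]_(i | i != x0) (d * (a i + b i)).
    rewrite /U /V /Rminus -bsum_opp -bsum_add; apply: bsum_le => i hi.
    have h1 := hab i hi. have h2 := ha i. have h3 := hb i.
    have -> : a i ^ 2 + - b i ^ 2 = (a i - b i) * (a i + b i) by ring.
    apply: Rmult_le_compat_r; first lra.
    have := Rle_abs (a i - b i); lra.
  have : \big[Rplus/0]_(i | i != x0) (d * (a i + b i)) <=
         \big[Rplus/0]_(i | i != x0) (d * (r / 4 * (a i + b i) ^ 2 + 1 / r)) by apply: bsum_le.
  lra.
have hUV2 : V - U <= 2 * d * r.
  have : V - U <= \big[Rplus/0]_(i | i != x0) (d * (a i + b i)).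
    rewrite /U /V /Rminus -bsum_opp -bsum_add; apply: bsum_le => i hi.
    have h1 := hab i hi. have h2 := ha i. have h3 := hb i.
    have -> : b i ^ 2 + - a i ^ 2 = (b i - a i) * (a i + b i) by ring.
    apply: Rmult_le_compat_r; first lra.
    have := Rle_abs (- (a i - b i)); rewrite Rabs_Ropp; lra.
  have : \big[Rplus/0]_(i | i != x0) (d * (a i + b i)) <=
         \big[Rplus/0]_(i | i != x0) (d * (r / 4 * (a i + b i) ^ 2 + 1 / r)) by apply: bsum_le.
  lra.
have hUV : (U - V) ^ 2 <= 4 * d ^ 2 * (n - 1).
  rewrite -hr2; have -> : 4 * d ^ 2 * (r * r) = (2 * d * r) ^ 2 by ring.
  apply: sq_le_of_abs; apply: Rabs_le; lra.
set a0 := a x0 in ha0 sa *. set b0 := b x0 in hb0 sb *.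
have a0p : 0 <= a0 := ha x0. have b0p : 0 <= b0 := hb x0.
have hn0 : 0 < 1 / n by apply: Rdiv_lt_0_compat; lra.
have hab0 : 1 / n <= a0 * b0.
  have hsq : (1 / n) ^ 2 <= (a0 * b0) ^ 2.
    rewrite Rpow_mult_distr (_ : (1/n)^2 = (1/n) * (1/n)); last by ring.
    apply: Rmult_le_compat; lra.
  have hp : 0 <= a0 * b0 by apply: Rmult_le_pos.
  apply: Rnot_lt_le => hlt.
  have : (a0 * b0) ^ 2 < (1 / n) ^ 2.
    have := Rmult_lt_0_compat (1/n - a0*b0) (1/n + a0*b0) ltac:(lra) ltac:(lra). lra.
  lra.
have hsum : 4 / n <= (a0 + b0) ^ 2.
  have : 4 / n = 1 / n + 2 * (1 / n) + 1 / n by field; lra.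
  lra.
have key : (a0 - b0) ^ 2 * (a0 + b0) ^ 2 = (U - V) ^ 2.
  have -> : U - V = b0 ^ 2 - a0 ^ 2 by lra.
  ring.
have : (a0 - b0) ^ 2 * (4 / n) <= 4 * d ^ 2 * (n - 1).
  have := Rmult_le_compat_l ((a0 - b0)^2) _ _ (pow2_ge_0 _) hsum. lra.
move=> h.
have hab2 : (a0 - b0) ^ 2 <= n * (n - 1) * d ^ 2.
  have e : (a0 - b0) ^ 2 = ((a0 - b0) ^ 2 * (4 / n)) * (n / 4) by field; lra.
  rewrite e.
  have -> : n * (n - 1) * d ^ 2 = 4 * d ^ 2 * (n - 1) * (n / 4) by field.
  apply: Rmult_le_compat_r => //; lra.
have -> : (n ^ 2 - 1) * d ^ 2 = n * (n - 1) * d ^ 2 + (n - 1) * d ^ 2 by ring.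
lra.
Qed.

Lemma bsig (Y : finType) (P : pred Y) (F : Y -> R) :
  \big[Rplus/0]_(t : {y : Y | P y}) F (val t) = \big[Rplus/0]_(y | P y) F y.
Proof. by rewrite (big_sub (op := Rplus) (idx := 0) P F). Qed.

Lemma split2 (Y : finType) (G : Y -> R) a b : a != b ->
  Rsum G = G a + G b + \big[Rplus/0]_(y | (y != a) && (y != b)) G y.
Proof.
move=> hab; rewrite (Rsum_D1 _ a) (bigD1 b) /=; last by rewrite eq_sym.
ring.
Qed.

Lemma mutinfo_diff (X Y : finType) (W : X -> Y -> R) (pi : X -> R) (a b : Y) : a != b ->
  mutinfo pi W - mutinfo pi (merge_letters W a b) =
  Rsum (fun x => pi x * (xlogdiv (W x a) (outprob pi W a) + xlogdiv (W x b) (outprob pi W b)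
        - xlogdiv (W x a + W x b) (outprob pi W a + outprob pi W b))).
Proof.
move=> hab.
have oN : outprob pi (merge_letters W a b) None = outprob pi W a + outprob pi W b.
  by rewrite /outprob /Rsum -bsum_add; apply: eq_bigr => x _ /=; ring.
rewrite /mutinfo {1 2}/Rsum /Rminus -bsum_opp -bsum_add; apply: eq_bigr => x _.
rewrite -/(Rsum (fun i => pi x * xlogdiv (W x i) (outprob pi W i))) (@split2 Y _ a b hab).
have -> : Rsum (fun y => pi x * xlogdiv (merge_letters W a b x y) (outprob pi (merge_letters W a b) y))
  = pi x * xlogdiv (W x a + W x b) (outprob pi W a + outprob pi W b) +
    \big[Rplus/0]_(y | (y != a) && (y != b)) (pi x * xlogdiv (W x y) (outprob pi W y)).
  rewrite /Rsum big_opt oN /=.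
  by rewrite -(@bsig Y (fun y => (y != a) && (y != b)) (fun y => pi x * xlogdiv (W x y) (outprob pi W y))).
ring.
Qed.

Lemma div_ge0 x y : 0 <= x -> 0 < y -> 0 <= x / y.
Proof. move=> hx hy; rewrite /Rdiv; apply: Rmult_le_pos => //; left; exact: Rinv_0_lt_compat. Qed.

Lemma per_x pix u v p q K : 0 < pix -> 0 <= u -> 0 <= v -> 0 < p -> 0 < q -> p <= K -> q <= K ->
  pix * (xlogdiv u p + xlogdiv v q - xlogdiv (u + v) (p + q))
  <= 2 * K * (sqrt (pix * u / p) - sqrt (pix * v / q)) ^ 2.
Proof.
move=> hpi hu hv hp hq hpK hqK.
have hup : 0 <= u / p by apply: div_ge0.
have hvq : 0 <= v / q by apply: div_ge0.
set al := sqrt (u / p). set be := sqrt (v / q).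
have eu : u = p * al ^ 2 by rewrite /al /= Rmult_1_r sqrt_sqrt //; field; lra.
have ev : v = q * be ^ 2 by rewrite /be /= Rmult_1_r sqrt_sqrt //; field; lra.
have e1 : sqrt (pix * u / p) = sqrt pix * al.
  by rewrite /al -sqrt_mult; [congr sqrt; rewrite /Rdiv Rmult_assoc | lra | done].
have e2 : sqrt (pix * v / q) = sqrt pix * be.
  by rewrite /be -sqrt_mult; [congr sqrt; rewrite /Rdiv Rmult_assoc | lra | done].
rewrite e1 e2.
have -> : (sqrt pix * al - sqrt pix * be) ^ 2 = (sqrt pix * sqrt pix) * (al - be) ^ 2 by ring.
rewrite sqrt_sqrt; last lra.
have L := @xlog_loss p q K _ _ hp hq hpK hqK (sqrt_pos (u / p)) (sqrt_pos (v / q)).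
rewrite -/al -/be -eu -ev in L.
have := Rmult_le_compat_l pix _ _ ltac:(lra) L.
lra.
Qed.

Close Scope R_scope.
Lemma cardG (X : finType) (N : nat) (x0 : X) :
  #|[set g : {ffun X -> 'I_N.+1} | g x0 == ord0]| = expn N.+1 (#|X|.-1).
Proof.
pose F := fun x : X => if x == x0 then pred1 (@ord0 N) else predT.
have -> : [set g : {ffun X -> 'I_N.+1} | g x0 == ord0] = [set g | g \in finfun.family F].
  apply/setP => g; rewrite !inE; apply/eqP/familyP.
    move=> h x; rewrite /F; case: eqP => [->|] //=; by rewrite h.
  by move=> /(_ x0); rewrite /F eqxx => /eqP.
rewrite cardsE card_family foldrE big_map.
rewrite big_enum /= (bigD1 x0) //= /F eqxx card1 mul1n.
rewrite (eq_bigr (fun _ => N.+1)); last by move=> x /negPf ->; rewrite card_ord.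
rewrite prod_nat_const -(cardC1 x0); congr (expn _ _); apply: eq_card.
Qed.
Lemma cardCells (X : finType) (N : nat) :
  #|[set c : X * {ffun X -> 'I_N.+1} | c.2 c.1 == ord0]| = #|X| * expn N.+1 (#|X|.-1).
Proof.
rewrite -sum1_card.
rewrite (eq_bigl (fun c : X * {ffun X -> 'I_N.+1} => true && (c.2 c.1 == ord0))); last by move=> c; rewrite inE.
rewrite -(pair_big_dep (fun _ => true) (fun x0 (g : {ffun X -> 'I_N.+1}) => g x0 == ord0) (fun _ _ => 1)) /=.
rewrite (eq_bigr (fun _ => expn N.+1 (#|X|.-1))); last first.
  move=> x0 _; rewrite -(@cardG X N x0) -sum1_card; apply: eq_bigl => g; by rewrite inE.
by rewrite sum_nat_const; congr (_ * _); apply: eq_card.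
Qed.
Open Scope R_scope.
Lemma gamma_bound k : 0 < gamma_half k /\ gamma_half k <= Rpower ((INR k + 2) / 2) (INR k / 2).
Proof.
have PIp := PI_RGT_0.
suff : forall k, (0 < gamma_half k /\ gamma_half k <= Rpower ((INR k + 2) / 2) (INR k / 2)) /\
                 (0 < gamma_half k.+1 /\ gamma_half k.+1 <= Rpower ((INR k.+1 + 2) / 2) (INR k.+1 / 2)).
  by move=> /(_ k) [].
elim=> [|j [IH1 IH2]].
  split.
    rewrite /= (_ : 0 / 2 = 0); last by field.
    rewrite Rpower_O; lra.
  rewrite /= (_ : (1 + 2) / 2 = 3 / 2); last by field.
  rewrite (_ : 1 / 2 = / 2); last by field.
  rewrite Rpower_sqrt; last lra.
  have s1 : 0 < sqrt PI by apply: sqrt_lt_R0.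
  have s2 : sqrt PI <= 2.
    rewrite -(sqrt_square 2); last lra.
    apply: sqrt_le_1_alt; have := PI_4; lra.
  have s3 : 1 <= sqrt (3 / 2) by rewrite -sqrt_1; apply: sqrt_le_1_alt; lra.
  split; lra.
split => //.
case: IH1 => p1 b1.
have e1 : gamma_half j.+2 = (1 + INR j / 2) * gamma_half j by [].
have hj := pos_INR j.
rewrite e1; split.
  apply: Rmult_lt_0_compat => //; lra.
have B : 0 < (INR j + 2) / 2 by lra.
apply: (Rle_trans _ ((1 + INR j / 2) * Rpower ((INR j + 2) / 2) (INR j / 2))).
  apply: Rmult_le_compat_l => //; lra.
have -> : (1 + INR j / 2) * Rpower ((INR j + 2) / 2) (INR j / 2) =
          Rpower ((INR j + 2) / 2) (INR j / 2 + 1).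
  rewrite Rpower_plus Rpower_1 //; field.
rewrite !S_INR.
have -> : (INR j + 1 + 1) / 2 = INR j / 2 + 1 by field.
apply: Rle_Rpower_l; lra.
Qed.

Lemma Rpower_div_e x y e : 0 < x -> 0 < y -> Rpower (x / y) e = Rpower x e / Rpower y e.
Proof.
move=> hx hy; rewrite /Rpower /Rdiv ln_mult ?ln_Rinv //; last by apply: Rinv_0_lt_compat.
rewrite Rmult_plus_distr_l exp_plus -exp_Ropp; congr (_ * _); congr exp; ring.
Qed.

Lemma div_le_div a b c d : 0 < b -> 0 < d -> a * d <= c * b -> a / b <= c / d.
Proof.
move=> hb hd h.
have -> : a / b = (a * d) * / (b * d) by field; lra.
have -> : c / d = (c * b) * / (b * d) by field; lra.
apply: Rmult_le_compat_r => //; left; apply: Rinv_0_lt_compat; nra.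
Qed.

Lemma mono5 e a a' q q' m w w' : 0 <= e -> 0 <= a -> a <= a' -> 0 <= q -> q <= q' ->
  0 <= m -> 0 <= w -> w <= w' -> e * a * q * m * w <= e * a' * q' * m * w'.
Proof.
move=> he ha haa hq hqq hm hw hww.
have h1 : 0 <= e * a by apply: Rmult_le_pos.
have h2 : 0 <= e * a * q by apply: Rmult_le_pos.
have h3 : 0 <= e * a * q * m by apply: Rmult_le_pos.
apply: Rmult_le_compat => //; try lra.
apply: Rmult_le_compat => //; try lra.
apply: Rmult_le_compat => //; try lra.
by apply: Rmult_le_compat_l.
Qed.

Lemma Rpower_pos x y : 0 < Rpower x y.
Proof. exact: exp_pos. Qed.

Lemma final_ineq (n M N : nat) : (2 <= n)%nat -> (1 <= N)%nat -> (0 < M)%nat ->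
  INR M <= 2 * INR n * INR (N.+1) ^ (n.-1) ->
  2 * (2 / INR M) * ((INR n ^ 2 - 1) * (1 / INR N) ^ 2) <=
  mu n * Rpower (INR M) (- ((INR n + 1) / (INR n - 1))).
Proof.
move=> hn hN hM hMN.
have PIp := PI_RGT_0.
have PI3 : 3 < PI by have := PI2_3_2; lra.
set nr := INR n.
have hnr : 2 <= nr.
  have : INR 2 <= INR n by apply: le_INR; exact/leP.
  rewrite /nr (_ : INR 2 = 2) //= ; ring.
have hNr : 1 <= INR N.
  have : INR 1 <= INR N by apply: le_INR; exact/leP.
  by rewrite (_ : INR 1 = 1).
have hMr : 0 < INR M by apply: lt_0_INR; exact/ltP.
have hn1 : INR (n.-1) = nr - 1.
  rewrite /nr; case: n hn {nr hnr hMN} => // k _; rewrite S_INR /=; ring.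
set e := 2 / (nr - 1).
have he : 0 < e by apply: Rdiv_lt_0_compat; lra.
rewrite /mu /nu -/nr.
have eg : (n - 1)%nat = n.-1 by rewrite subn1.
rewrite eg -/e.
set G := gamma_half n.-1.
have [Gp Gb] := gamma_bound n.-1.
rewrite -/G hn1 in Gb. rewrite -/G in Gp.
set Q := Rpower G e.
have hQ : 0 < Q := Rpower_pos _ _.
have hQb : Q <= (nr + 1) / 2.
  apply: (Rle_trans _ (Rpower (Rpower ((nr - 1 + 2) / 2) ((nr - 1) / 2)) e)).
    rewrite /Q; apply: Rle_Rpower_l; lra.
  rewrite Rpower_mult (_ : (nr - 1) / 2 * e = 1); last by rewrite /e; field; lra.
  rewrite Rpower_1; lra.
set P := Rpower (2 * nr) e.
have hP : 0 < P := Rpower_pos _ _.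
have eG : Rpower (2 * nr / G) e = P / Q by rewrite Rpower_div_e //; lra.
rewrite eG.
set s := sqrt (1 + 1 / (2 * (nr - 1))) - 1.
have hs0 : 0 < s.
  rewrite /s; have : 1 < sqrt (1 + 1 / (2 * (nr - 1))).
    apply: (Rle_lt_trans _ (sqrt 1)); first by rewrite sqrt_1; lra.
    apply: sqrt_lt_1_alt; split; first lra.
    have : 0 < 1 / (2 * (nr - 1)) by apply: Rdiv_lt_0_compat; lra.
    lra.
  lra.
have hs1 : s <= 1 / (4 * (nr - 1)).
  rewrite /s.
  have t0 : 0 < 1 / (2 * (nr - 1)) by apply: Rdiv_lt_0_compat; lra.
  have : sqrt (1 + 1 / (2 * (nr - 1))) <= 1 + 1 / (4 * (nr - 1)).
    rewrite -(sqrt_square (1 + 1 / (4 * (nr - 1)))); last first.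
      have : 0 < 1 / (4 * (nr - 1)) by apply: Rdiv_lt_0_compat; lra.
      lra.
    apply: sqrt_le_1_alt.
    have -> : 1 / (2 * (nr - 1)) = 2 * (1 / (4 * (nr - 1))) by field; lra.
    have := pow2_ge_0 (1 / (4 * (nr - 1))). simpl. lra.
  lra.
set A := PI * nr * (nr - 1) / (2 * s ^ 2).
have hA : 8 * PI * nr * (nr - 1) ^ 3 <= A.
  rewrite /A.
  have hs2 : s ^ 2 <= (1 / (4 * (nr - 1))) ^ 2 by apply: pow_incr; lra.
  have hss : 0 < s ^ 2 by apply: pow_lt.
  rewrite (_ : 8 * PI * nr * (nr - 1) ^ 3 = (8 * PI * nr * (nr - 1) ^ 3) / 1); last by field.
  apply: div_le_div; [lra | nra |].
  have e1 : 8 * PI * nr * (nr - 1) ^ 3 * (2 * s ^ 2) = PI * nr * (nr - 1) * (16 * (nr - 1) ^ 2 * s ^ 2) by ring.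
  rewrite e1.
  apply: Rmult_le_compat_l; first (apply: Rmult_le_pos; [apply: Rmult_le_pos|]; lra).
  apply: (Rle_trans _ (16 * (nr - 1) ^ 2 * (1 / (4 * (nr - 1))) ^ 2)); last by right; field; lra.
  apply: Rmult_le_compat_l => //; have := pow2_ge_0 (nr - 1); lra.
have eexp : - ((nr + 1) / (nr - 1)) = - 1 + - e by rewrite /e; field; lra.
have em1 : Rpower (INR M) (- 1) = / INR M.
  by rewrite (_ : -1 = - (1)); [rewrite Rpower_Ropp Rpower_1 // | ring].
rewrite eexp Rpower_plus em1.
set T := Rpower (INR M) (- e).
have PT : / (INR N.+1) ^ 2 <= P * T.
  have -> : P * T = Rpower (2 * nr / INR M) e.
    by rewrite Rpower_div_e ?/T ?Rpower_Ropp //; lra.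
  have hN1 : 0 < INR N.+1 by apply: lt_0_INR; apply/ltP.
  have hlo : 0 < / (INR N.+1 ^ n.-1) by apply: Rinv_0_lt_compat; apply: pow_lt.
  have : / (INR N.+1 ^ n.-1) <= 2 * nr / INR M.
    rewrite -(Rmult_1_l (/ _)) -/(Rdiv 1 _). apply: div_le_div => //; first by apply: pow_lt.
    rewrite /nr; lra.
  move=> hle.
  apply: (Rle_trans _ (Rpower (/ (INR N.+1 ^ n.-1)) e)); last by apply: Rle_Rpower_l; lra.
  rewrite /Rpower ln_Rinv ?ln_pow //; last by apply: pow_lt.
  rewrite hn1 (_ : e * - ((nr - 1) * ln (INR N.+1)) = - (INR 2 * ln (INR N.+1))); last first.
    rewrite /e /=; field; lra.
  rewrite exp_Ropp -ln_pow // exp_ln //; [by right | by apply: pow_lt].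
have hQi : 2 / (nr + 1) <= / Q.
  rewrite (_ : 2 / (nr + 1) = / ((nr + 1) / 2)); last by field; lra.
  by apply: Rinv_le_contravar.
have hA0 : 0 <= 8 * PI * nr * (nr - 1) ^ 3.
  have h := pow_lt (nr - 1) 3 ltac:(lra).
  apply: Rmult_le_pos; [|lra]. apply: Rmult_le_pos; lra.
have hN1 : 0 < INR N.+1 by apply: lt_0_INR; apply/ltP.
have E : e * (A * (P / Q)) * (/ INR M * T) =
         e * A * (/ Q) * (/ INR M) * (P * T) by field; lra.
rewrite E.
have hMi : 0 < / INR M by apply: Rinv_0_lt_compat.
apply: (Rle_trans _ (e * (8 * PI * nr * (nr - 1) ^ 3) * (2 / (nr + 1)) * (/ INR M) * (/ INR N.+1 ^ 2))).
  2: {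
  apply: mono5; try lra; try (by left; apply: Rinv_0_lt_compat; apply: pow_lt).
  by left; apply: Rdiv_lt_0_compat; lra. }
rewrite S_INR.
set Nr := INR N in hNr *.
have e2 : 2 * (2 / INR M) * ((nr ^ 2 - 1) * (1 / Nr) ^ 2) = / INR M * (4 * (nr ^ 2 - 1) / Nr ^ 2)
  by field; split; lra.
have e3 : e * (8 * PI * nr * (nr - 1) ^ 3) * (2 / (nr + 1)) * / INR M * / (Nr + 1) ^ 2
   = / INR M * (32 * PI * nr * (nr - 1) ^ 2 / ((nr + 1) * (Nr + 1) ^ 2)) by rewrite /e; field; split; lra.
rewrite e2 e3.
apply: Rmult_le_compat_l; first lra.
apply: div_le_div; [by apply: pow_lt; lra | by apply: Rmult_lt_0_compat; [lra | apply: pow_lt; lra] |].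
have h1 : (Nr + 1) ^ 2 <= 4 * Nr ^ 2 by simpl; nra.
have h2 : (nr + 1) ^ 2 <= 2 * PI * nr * (nr - 1).
  have := Rmult_le_pos (PI - 3) (nr * (nr - 1)) ltac:(lra) ltac:(apply: Rmult_le_pos; lra).
  have := Rmult_le_pos (nr - 2) (5 * nr + 2) ltac:(lra) ltac:(lra).
  simpl; lra.
have h3 : 0 <= nr ^ 2 - 1 by simpl; nra.
have : 4 * (nr ^ 2 - 1) * ((nr + 1) * (Nr + 1) ^ 2) <= 4 * (nr ^ 2 - 1) * ((nr + 1) * (4 * Nr ^ 2)).
  apply: Rmult_le_compat_l; first lra.
  apply: Rmult_le_compat_l; lra.
have : 4 * (nr ^ 2 - 1) * ((nr + 1) * (4 * Nr ^ 2)) = 16 * (nr - 1) * Nr ^ 2 * (nr + 1) ^ 2 by ring.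
have : 16 * (nr - 1) * Nr ^ 2 * (nr + 1) ^ 2 <= 16 * (nr - 1) * Nr ^ 2 * (2 * PI * nr * (nr - 1)).
  apply: Rmult_le_compat_l => //; have := pow_lt Nr 2 ltac:(lra); nra.
lra.
Qed.

Lemma exists_N (n M : nat) : (1 < n)%nat -> 2 * INR n < INR M ->
  exists N', 2 * INR n * INR N'.+1 ^ n.-1 < INR M /\ INR M <= 2 * INR n * INR N'.+2 ^ n.-1.
Proof.
move=> hn h; apply: NNPP => H.
have A : forall k, 2 * INR n * INR k.+1 ^ n.-1 < INR M.
  elim=> [|k IH].
    by rewrite (_ : INR 1 = 1) // pow1 Rmult_1_r.
  apply: Rnot_le_lt => hle; apply: H; exists k; split => //.
have hM := pos_INR M.
have hM1 : 1 <= INR M.+1 by rewrite S_INR; lra.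
have pw : INR M.+1 <= INR M.+1 ^ n.-1.
  case: n hn {h H A} => [|[|k]] // _.
  change (INR M.+1 <= INR M.+1 * INR M.+1 ^ k).
  have := pow_R1_Rle _ k hM1. move=> h1.
  have := Rmult_le_compat_l (INR M.+1) 1 (INR M.+1 ^ k) ltac:(lra) h1. lra.
have hn2 : 1 <= 2 * INR n.
  have : INR 1 <= INR n by apply: le_INR; apply/leP; exact: ltnW.
  rewrite (_ : INR 1 = 1) //; lra.
have := A M.
have := Rmult_le_compat_r (INR M.+1 ^ n.-1) 1 (2 * INR n) ltac:(lra) hn2.
rewrite S_INR in pw *. lra.
Qed.

Lemma Rsum_lt (I : finType) (F G : I -> R) (i0 : I) :
  (forall i, F i < G i) -> Rsum F < Rsum G.
Proof.
move=> h; rewrite (Rsum_D1 _ i0) (Rsum_D1 G i0).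
have := bsum_le (fun i => i != i0) F G (fun i _ => Rlt_le _ _ (h i)).
have := h i0. lra.
Qed.

Lemma Rsum_const (I : finType) c : Rsum (fun _ : I => c) = INR #|I| * c.
Proof. by rewrite /Rsum bsum_const; congr (INR _ * _); apply: eq_card. Qed.

Lemma bin_exists N' r : 0 <= r <= INR N'.+1 -> exists k : 'I_N'.+1, INR k <= r <= INR k + 1.
Proof.
suff : 0 <= r <= INR N'.+1 -> exists k, (k < N'.+1)%nat /\ INR k <= r <= INR k + 1.
  by move=> H /H [k [hk hr]]; exists (Ordinal hk).
elim: N' => [|N' IH] hr.
  by exists 0%nat; split => //; rewrite (_ : INR 1 = 1) // in hr; simpl; lra.
case: (Rle_or_lt r (INR N'.+1)) => h.
  have [k [hk hk2]] := IH (conj (proj1 hr) h).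
  by exists k; split => //; apply: (ltn_trans hk).
exists N'.+1; split => //.
rewrite S_INR in hr; lra.
Qed.

Definition rleb (x y : R) : bool := if Rle_dec x y then true else false.

Lemma rlebP x y : rleb x y = true <-> x <= y.
Proof. by rewrite /rleb; case: Rle_dec. Qed.

Lemma INR_expn a k : INR (expn a k) = INR a ^ k.
Proof.
elim: k => [|k IH]; first by rewrite expn0.
by rewrite expnS mulnE mult_INR IH.
Qed.

Close Scope R_scope.

Theorem theorem2 (X Y : finType) (W : X -> Y -> R) (pi : X -> R) :
  (2 <= #|X|)%N ->
  (2 * #|X| < #|Y|)%N ->
  (forall x y, (0 <= W x y)%R) ->
  (forall x, Rsum (fun y => W x y) = 1%R) ->
  (forall x, (0 < pi x)%R) ->
  Rsum pi = 1%R ->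
  (forall y, (0 < outprob pi W y)%R) ->
  exists alpha beta : Y, alpha <> beta /\
    (mutinfo pi W - mutinfo pi (merge_letters W alpha beta) <=
     mu #|X| * Rpower (INR #|Y|) (- ((INR #|X| + 1) / (INR #|X| - 1))))%R.
Proof.
Open Scope R_scope.
move=> hX hXY hW hW1 hpi hpi1 hp.
have hXr : 2 <= INR #|X|.
  have : INR 2 <= INR #|X| by apply: le_INR; apply/leP.
  by rewrite (_ : INR 2 = 2) //= ; ring.
have hXYr : 2 * INR #|X| < INR #|Y|.
  have : INR (muln 2 #|X|) < INR #|Y| by apply: lt_INR; apply/ltP.
  by rewrite mulnE mult_INR (_ : INR 2 = 2) //=; ring.
have hMr : 0 < INR #|Y| by lra.
have sump : Rsum (outprob pi W) = 1.
  rewrite /Rsum /outprob /Rsum exchange_big /=.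
  rewrite -hpi1 /Rsum; apply: eq_bigr => x _.
  rewrite bsum_mulr; have := hW1 x; rewrite /Rsum => ->; ring.
have [N' [hN1 hN2]] := @exists_N #|X| #|Y| hX hXYr.
pose z y x := sqrt (pi x * W x y / outprob pi W y).
have hz0 : forall y x, 0 <= z y x by move=> y x; apply: sqrt_pos.
have hzsq : forall y x, z y x ^ 2 = pi x * W x y / outprob pi W y.
  move=> y x; rewrite /z /= Rmult_1_r sqrt_sqrt //; apply: div_ge0 => //.
  apply: Rmult_le_pos => //; exact: Rlt_le.
have hz1 : forall y, Rsum (fun x => z y x ^ 2) = 1.
  move=> y; rewrite /Rsum (eq_bigr (fun x => / outprob pi W y * (pi x * W x y))); last first.
    move=> x _; rewrite hzsq; field; have := hp y; lra.
  rewrite bsum_mulr -/(Rsum _) -/(outprob pi W y) Rinv_l //; have := hp y; lra.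
have hzle : forall y x, z y x <= 1.
  move=> y x; apply: Rnot_lt_le => hlt.
  have h1 : 1 < z y x ^ 2.
    have := Rmult_lt_0_compat (z y x - 1) (z y x + 1) ltac:(lra) ltac:(lra); simpl; lra.
  have := hz1 y; rewrite (Rsum_D1 _ x).
  have := bsum_ge0 (fun i => i != x) (fun i => z y i ^ 2) (fun i _ => pow2_ge_0 _). lra.
have [x1 _] : exists x1 : X, x1 \in X by apply/card_gt0P; apply: (ltn_trans _ hX).
have cell : forall y, exists c : X * {ffun X -> 'I_N'.+1},
   [/\ c.2 c.1 == ord0, 1 / INR #|X| <= z y c.1 ^ 2 &
       forall x, x != c.1 -> INR (c.2 x) <= z y x * INR N'.+1 <= INR (c.2 x) + 1].
  move=> y.
  have [x0 hx0] : exists x0, 1 / INR #|X| <= z y x0 ^ 2.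
    apply: NNPP => hno.
    have all : forall x, z y x ^ 2 < 1 / INR #|X|.
      move=> x; apply: Rnot_le_lt => h; apply: hno; by exists x.
    have := @Rsum_lt X _ _ x1 all. rewrite hz1 Rsum_const.
    have -> : INR #|X| * (1 / INR #|X|) = 1 by field; lra.
    lra.
  have hb : forall x, exists k : 'I_N'.+1, INR k <= z y x * INR N'.+1 <= INR k + 1.
    move=> x; apply: bin_exists; have := pos_INR N'.+1; have := hz0 y x; have := hzle y x.
    move=> a b c; split; first by apply: Rmult_le_pos.
    have := Rmult_le_compat_r (INR N'.+1) _ _ c a. lra.
  have [f hf] := fin_all_exists hb.
  exists (x0, [ffun x => if x == x0 then ord0 else f x]); split => /=.
  - by rewrite ffunE eqxx.
  - done.
  - by move=> x hx; rewrite ffunE (negbTE hx); exact: hf.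
have [cl hcl] := fin_all_exists cell.
set K := 2 / INR #|Y|.
pose S := [set y | rleb (outprob pi W y) K].
(* Markov *)
have hSc : INR #|~: S| * K <= 1.
  rewrite -sump /Rsum (bigID (fun y => rleb (outprob pi W y) K)) /=.
  have h1 := bsum_ge0 (fun y => rleb (outprob pi W y) K) (outprob pi W) (fun y _ => Rlt_le _ _ (hp y)).
  have h2 : \big[Rplus/0]_(y | ~~ rleb (outprob pi W y) K) K <=
            \big[Rplus/0]_(y | ~~ rleb (outprob pi W y) K) outprob pi W y.
    apply: bsum_le => y hy; apply: Rlt_le; apply: Rnot_le_lt => hle.
    by move/rlebP: hle; move/negP: hy.
  rewrite bsum_const in h2.
  have -> : #|~: S| = #|(fun y => ~~ rleb (outprob pi W y) K)|.
    by apply: eq_card => y; rewrite !inE.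
  apply: (Rle_trans _ _ _ h2); lra.
have hS : (#|X| * expn N'.+1 #|X|.-1 < #|S|)%nat.
  apply/ltP; apply: INR_lt.
  rewrite mulnE mult_INR INR_expn.
  have hc := cardsC S.
  have : INR #|S| + INR #|~: S| = INR #|Y| by rewrite -plus_INR -addnE hc.
  have : INR #|~: S| <= INR #|Y| / 2.
    have := Rmult_le_compat_r (INR #|Y| / 2) _ _ ltac:(lra) hSc.
    rewrite /K (_ : INR #|~: S| * (2 / INR #|Y|) * (INR #|Y| / 2) = INR #|~: S|); last by field; lra.
    lra.
  lra.
set C := [set c : X * {ffun X -> 'I_N'.+1} | c.2 c.1 == ord0].
have sub : [set cl y | y in S] \subset C.
  apply/subsetP => c /imsetP [y _ ->]; rewrite inE; by case: (hcl y).
have [y1 [y2 [h1 [h2 [hne heq]]]]] :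
    exists y1 y2, y1 \in S /\ y2 \in S /\ y1 != y2 /\ cl y1 = cl y2.
  apply: NNPP => hno.
  have inj : {in S &, injective cl}.
    move=> a b ha hb e; apply: NNPP => neq; apply: hno; exists a, b; split => //; split => //.
    by split => //; apply/eqP.
  have le : (#|S| <= #|X| * expn N'.+1 #|X|.-1)%nat.
    by rewrite -(card_in_imset inj) -(cardCells X N'); exact: subset_leq_card.
  by move: hS; rewrite ltnNge le.
exists y1, y2; split; first by apply/eqP.
rewrite mutinfo_diff //.
have hp1 : outprob pi W y1 <= K by move: h1; rewrite inE => /rlebP.
have hp2 : outprob pi W y2 <= K by move: h2; rewrite inE => /rlebP.
have step1 : Rsum (fun x => pi x * (xlogdiv (W x y1) (outprob pi W y1) + xlogdiv (W x y2) (outprob pi W y2)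
        - xlogdiv (W x y1 + W x y2) (outprob pi W y1 + outprob pi W y2)))
   <= 2 * K * Rsum (fun x => (z y1 x - z y2 x) ^ 2).
  rewrite /Rsum -bsum_mulr; apply: bsum_le => x _.
  by apply: per_x.
case E1 : (cl y1) (hcl y1) => [x0 g] [_ a1 b1].
rewrite heq in E1.
case: (hcl y2); rewrite E1 => _ a2 b2.
move: a1 b1 a2 b2; rewrite -[(x0, g).1]/x0 -[(x0, g).2]/g => a1 b1 a2 b2.
have hN : 0 < INR N'.+1 by apply: lt_0_INR; apply/ltP.
have dist : Rsum (fun x => (z y1 x - z y2 x) ^ 2) <= (INR #|X| ^ 2 - 1) * (1 / INR N'.+1) ^ 2.
  apply: (@dist_lemma X (z y1) (z y2) x0 (1 / INR N'.+1) (hz0 y1) (hz0 y2) (hz1 y1) (hz1 y2) a1 a2 hX).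
    by apply: Rdiv_lt_0_compat; lra.
  move=> x hx; have [c1 c2] := b1 x hx; have [d1 d2] := b2 x hx.
  have e : z y1 x - z y2 x = (z y1 x * INR N'.+1 - z y2 x * INR N'.+1) * (1 / INR N'.+1) by field; lra.
  rewrite e Rabs_mult (Rabs_right (1 / INR N'.+1)); last by left; apply: Rdiv_lt_0_compat; lra.
  rewrite -{2}(Rmult_1_l (1 / INR N'.+1)); apply: Rmult_le_compat_r; first by left; apply: Rdiv_lt_0_compat; lra.
  apply: Rabs_le; lra.
have hK : 0 <= 2 * K by rewrite /K; left; apply: Rmult_lt_0_compat; [lra | apply: Rdiv_lt_0_compat; lra].
have := Rmult_le_compat_l _ _ _ hK dist.
have hM0 : (0 < #|Y|)%nat by apply/ltP; apply: INR_lt; rewrite (_ : INR 0 = 0) //.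
have Fi := @final_ineq #|X| #|Y| N'.+1 hX (isT : (0 < N'.+1)%nat) hM0 hN2.
rewrite -/K in Fi.
move=> h; lra.
Qed.
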